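(* Let $X=\{x_1,\ldots,x_n\}\subset\mathbb{R}^d$ be a configuration of dimension $d$ (affine hull equal to $\mathbb{R}^d$), and suppose $\Delta_{d+2\,\ldots\, n}\neq 0$. Then a weight vector $(w_1,\ldots,w_n)$ belongs to $\mathbb{W}_0(X)$ if and only if \[(-1)^{i-d}\,w_i\,\Delta_{d+2\,\ldots\, n}=\sum_{l=d+2}^n w_l\,\Delta_{i\,d+2\,\ldots\,\widehat{l}\,\ldots\, n},\qquad i=1,\ldots,d+1,\] where $\widehat{l}$ indicates that the index $l$ is omitted from the list.
   Context: $\mathbb{W}_0(X)\subseteq\mathbb{R}^n$ is the space of weight vectors $(w_1,\ldots,w_n)$ with $\sum_j w_j=0$ and $\sum_j w_jx_j=0$ (equivalently $\sum_j w_j\overrightarrow{px_j}=\overrightarrow{O}$ for all $p$). For indices $j_1<\cdots<j_\beta$, $\Delta_{j_1\ldots j_\beta}$ denotes the oriented volume of the subconfiguration $X\setminus\{x_{j_1},\ldots,x_{j_\beta}\}$: when this subconfiguration has $d+1$ points, it is the determinant of its $(d+1)\times(d+1)$ augmented configuration matrix, whose columns are $\binom{1}{x_j}$ for the remaining points $x_j$ in increasing order of index (and the volume is zero whenever the subconfiguration is not a $d$-simplex). In the indices $i\,d+2\ldots\widehat{l}\ldots n$, the removed points are $x_i$ and all $x_k$ with $d+2\le k\le n$, $k\ne l$. *)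

(* Defs.v *)
(* Points of R^d are column vectors 'cV[R]_d; the
   configuration X = {x_1,...,x_n} is a map x : 'I_n -> 'cV[R]_d
   (0-based: paper index j corresponds to ordinal j-1). *)
From HB Require Import structures.
From mathcomp Require Import all_boot all_order all_algebra.
From mathcomp Require Import reals.
Set Implicit Arguments. Unset Strict Implicit. Unset Printing Implicit Defensive.
Import Order.TTheory GRing.Theory Num.Theory.
Local Open Scope ring_scope.

Section Config.
Variables (R : realType) (d n : nat) (x : 'I_n -> 'cV[R]_d).

Definition full_dim : Prop :=
  forall y : 'cV[R]_d, exists w : 'I_n -> R,
    \sum_(j < n) w j = 1 /\ \sum_(j < n) w j *: x j = y.

Definition W0 (w : 'I_n -> R) : Prop :=
  \sum_(j < n) w j = 0 /\ \sum_(j < n) w j *: x j = 0.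

Definition aug (j : 'I_n) : 'cV[R]_(1 + d) := col_mx (1%:M : 'M[R]_1) (x j).

Definition ovol (S : {set 'I_n}) : R :=
  if #|S| == (1 + d)%N then
    \det (\matrix_(r < 1 + d, k < 1 + d) (nth 0 (map aug (enum S)) k) r ord0)
  else 0.

(* Delta_T : oriented volume of X \ {x_j | j in T} *)
Definition Delta (T : {set 'I_n}) : R := ovol (~: T).

End Config.

(* Main.v *)
Require Import Defs.
From HB Require Import structures.
From mathcomp Require Import all_boot all_order all_algebra.
From mathcomp Require Import reals.
From mathcomp Require Import fingroup perm zify ring.
Import Order.TTheory GRing.Theory Num.Theory.
Local Open Scope ring_scope.
Set Implicit Arguments. Unset Strict Implicit.

Lemma filter_iota_all (a : pred nat) m k :
  (forall j, (m <= j < m + k)%N -> a j) -> filter a (iota m k) = iota m k.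
Proof.
elim: k m => [//|k IH] m H /=.
rewrite H; last by lia.
rewrite IH // => j Hj; apply: H; lia.
Qed.

Lemma filter_iota_none (a : pred nat) m k :
  (forall j, (m <= j < m + k)%N -> ~~ a j) -> filter a (iota m k) = [::].
Proof.
elim: k m => [//|k IH] m H /=.
rewrite (negbTE (H m _)); last by lia.
rewrite IH // => j Hj; apply: H; lia.
Qed.

Lemma val_enum_set n (S : {set 'I_n}) (P : pred nat) :
  (forall k : 'I_n, (k \in S) = P k) -> map val (enum S) = filter P (iota 0 n).
Proof.
move=> H; rewrite -val_enum_ord filter_map.
have -> : enum S = filter (mem S) (enum 'I_n).
  by rewrite enumT /enum_mem.
congr map; apply: eq_filter => k /=; by rewrite H.
Qed.

Lemma sign_lem (R : realType) (i d : nat) : (i <= d)%N ->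
  (-1 : R) ^ ((i.+1)%:Z - d%:Z) = - (-1) ^+ (d - i).
Proof.
move=> hid.
have -> : ((i.+1)%:Z - d%:Z = 1 - (d - i)%N%:Z)%R by rewrite -subzn //; lia.
rewrite exprzDr ?unitrN1 // expr1z expN1r.
by rewrite abszN absz_nat mulN1r.
Qed.

Definition gcol (R : realType) d n (x : 'I_n.+1 -> 'cV[R]_d) (j : nat) : 'cV[R]_(1 + d) :=
  aug x (inord j).
Definition mkM (R : realType) d (c : nat -> 'cV[R]_(1 + d)) : 'M[R]_(1 + d) :=
  \matrix_(r < 1 + d, k < 1 + d) c k r ord0.

Lemma mkM_E (R : realType) d (c : nat -> 'cV[R]_(1 + d)) r k :
  mkM c r k = c k r ord0.
Proof. by rewrite mxE. Qed.

Lemma ovol_seq (R : realType) d n (x : 'I_n.+1 -> 'cV[R]_d) (S : {set 'I_n.+1}) s :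
  map val (enum S) = s -> size s = (1 + d)%N ->
  ovol x S = \det (mkM (fun k => gcol x (nth 0%N s k))).
Proof.
move=> Hs Hsz.
have Hsz' : size (enum S) = (1 + d)%N by rewrite -(size_map val) Hs.
rewrite /ovol cardE Hsz' eqxx; congr (\det _); apply/matrixP => r k; rewrite !mxE.
rewrite (nth_map ord0) ?Hsz' ?ltn_ord // /gcol -Hs (nth_map ord0) ?Hsz' ?ltn_ord //.
by rewrite inord_val /aug mxE.
Qed.

Lemma enum_T0 n d : (d.+1 <= n)%N ->
  map val (enum (~: [set k : 'I_n | (d.+1 <= k)%N])) = iota 0 d.+1.
Proof.
move=> hn.
rewrite (@val_enum_set _ _ (fun k => (k < d.+1)%N)); last first.
  by move=> k; rewrite !inE -ltnNge.
rewrite -(subnKC hn) iotaD filter_cat filter_iota_all; last by lia.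
rewrite filter_iota_none ?cats0 //; lia.
Qed.

Lemma enum_Til n d (i l : 'I_n) : (i <= d)%N -> (d < l)%N ->
  map val (enum (~: (i |: [set k : 'I_n | (d.+1 <= k)%N && (k != l)])))
  = iota 0 i ++ iota i.+1 (d - i) ++ [:: nat_of_ord l].
Proof.
move=> hi hl.
rewrite (@val_enum_set _ _ (fun k : nat => (k != nat_of_ord i) && ((k < d.+1)%N || (k == nat_of_ord l)))); last first.
  move=> k; rewrite !inE negb_or negb_and -ltnNge negbK.
  by rewrite -!(inj_eq val_inj).
have hln := ltn_ord l; move: hi hl hln; move: (nat_of_ord i) (nat_of_ord l) => a b ha hb hc.
clear i l.
have -> : n = (a + (1 + ((d - a) + ((b - d.+1) + (1 + (n - b.+1))))))%N by lia.
rewrite !iotaD !filter_cat.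
rewrite filter_iota_all; last by lia.
rewrite filter_iota_none; last by lia.
rewrite filter_iota_all; last by lia.
rewrite filter_iota_none; last by lia.
rewrite filter_iota_all; last by lia.
rewrite filter_iota_none; last by lia.
rewrite /=.
have -> : (0 + a + 1 = a.+1)%N by lia.
by have -> : (a.+1 + (d - a) + (b - d.+1))%N = b by lia.
Qed.

Definition cB (R : realType) d n (x : 'I_n.+1 -> 'cV[R]_d) (i : nat) (v : 'cV[R]_(1 + d)) (j : nat) :=
  if (j < i)%N then gcol x j else if (j < d)%N then gcol x j.+1 else v.
Definition Kc (R : realType) d n (x : 'I_n.+1 -> 'cV[R]_d) (i : nat) (r : 'I_(1 + d)) : R :=
  cofactor (mkM (cB x i 0)) r (@ord_max d).
Definition F (R : realType) d n (x : 'I_n.+1 -> 'cV[R]_d) (i : nat) (v : 'cV[R]_(1 + d)) : R :=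
  \sum_r v r ord0 * Kc x i r.

Lemma detB_F (R : realType) d n (x : 'I_n.+1 -> 'cV[R]_d) i v : (i <= d)%N ->
  \det (mkM (cB x i v)) = F x i v.
Proof.
move=> hi; rewrite (expand_det_col _ (@ord_max d)); apply: eq_bigr => r _.
have Hv : mkM (cB x i v) r (@ord_max d) = v r ord0.
  rewrite mxE /cB /= ltnn.
  by have -> : (d < i)%N = false by apply/negbTE; rewrite -leqNgt.
rewrite Hv /Kc; congr (_ * _); rewrite /cofactor; congr (_ * \det _).
apply/matrixP => a b; rewrite !mxE /cB.
have hb : (lift (@ord_max d) b < d)%N by rewrite lift_max /= ltn_ord.
by rewrite hb.
Qed.

Lemma Delta_il (R : realType) d n (x : 'I_n.+1 -> 'cV[R]_d) (i l : 'I_n.+1) :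
  (i <= d)%N -> (d < l)%N ->
  Delta x (i |: [set k : 'I_n.+1 | (d.+1 <= k)%N && (k != l)])
  = \det (mkM (cB x i (gcol x l))).
Proof.
move=> hi hl; rewrite /Delta (@ovol_seq _ _ _ x _ _ (enum_Til hi hl)); last first.
  rewrite !size_cat !size_iota /=; lia.
congr (\det _); apply/matrixP => r k; rewrite !mkM_E /cB.
have hk := ltn_ord k.
case: ltnP => hki.
  by rewrite nth_cat size_iota hki nth_iota.
rewrite nth_cat size_iota ltnNge hki /= nth_cat size_iota.
case: ltnP => hkd.
  have -> : (k < d)%N by lia.
  rewrite nth_iota //; congr (gcol _ _ _ _); lia.
have -> : (k < d)%N = false by lia.
have -> : (k - i - (d - i) = 0)%N by lia.
by [].
Qed.

Lemma Delta_0 (R : realType) d n (x : 'I_n.+1 -> 'cV[R]_d) : (d.+1 <= n.+1)%N ->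
  Delta x [set k : 'I_n.+1 | (d.+1 <= k)%N] = \det (mkM (gcol x)).
Proof.
move=> hn; rewrite /Delta (@ovol_seq _ _ _ x _ _ (enum_T0 hn)) ?size_iota //.
congr (\det _); apply/matrixP => r k; rewrite !mkM_E.
by rewrite nth_iota.
Qed.

Lemma det_xcol (R : realType) m (A : 'M[R]_m) (j1 j2 : 'I_m) :
  j1 != j2 -> \det (xcol j1 j2 A) = - \det A.
Proof.
by move=> h; rewrite xcolE det_mulmx /tperm_mx det_perm odd_tperm h expr1 mulrN1.
Qed.

Lemma F_other (R : realType) d n (x : 'I_n.+1 -> 'cV[R]_d) (i j : nat) :
  (i <= d)%N -> (j <= d)%N -> j != i -> F x i (gcol x j) = 0.
Proof.
move=> hi hj hji; rewrite -detB_F // -det_tr.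
pose c0 := if (j < i)%N then j else j.-1.
have hc0 : (c0 < d)%N.
  rewrite /c0; case: (ltnP j i) => h /=; move: hji => /eqP hji; lia.
apply: (@determinant_alternate _ _ _ (@ord_max d) (inord c0)).
  by rewrite -(inj_eq val_inj) /= inordK; lia.
move=> r; rewrite !mxE /cB inordK; last by lia.
rewrite ltnn ltnNge hi /=.
rewrite /c0; case: (ltnP j i) => h.
  by rewrite h.
have -> : (j.-1 < i)%N = false by lia.
have -> : (j.-1 < d)%N by lia.
by have -> : j.-1.+1 = j by lia.
Qed.

Definition colf (R : realType) d n (x : 'I_n.+1 -> 'cV[R]_d) (i k j : nat) : 'cV[R]_(1 + d) :=
  if (j < i)%N then gcol x j else if (j < k)%N then gcol x j.+1
  else if j == k then gcol x i else gcol x j.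

Lemma inordK1 d k : (k <= d)%N -> nat_of_ord (inord k : 'I_(1 + d)) = k.
Proof. by move=> h; rewrite inordK. Qed.

Lemma colf_step (R : realType) d n (x : 'I_n.+1 -> 'cV[R]_d) (i m : nat) :
  (i + m < d)%N ->
  \det (mkM (colf x i (i + m).+1)) = - \det (mkM (colf x i (i + m))).
Proof.
move=> h.
rewrite -(@det_xcol _ _ _ (inord (i + m)) (inord (i + m).+1)); last first.
  by rewrite -(inj_eq val_inj) /= !inordK //; lia.
congr (\det _); apply/matrixP => r c; rewrite /xcol /col_perm [RHS]mxE !mkM_E.
case: (tpermP (inord (i + m)) (inord (i + m).+1) c) => [->|->|/eqP h1 /eqP h2]; rewrite /colf ?inordK1; try lia.
- have -> : (i + m < i)%N = false by lia.
  have -> : ((i + m).+1 < i)%N = false by lia.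
  have -> : ((i + m).+1 < i + m)%N = false by lia.
  rewrite ltnSn; by have -> : ((i + m).+1 == (i + m)%N) = false by lia.
- have -> : (i + m < i)%N = false by lia.
  have -> : ((i + m).+1 < i)%N = false by lia.
  by rewrite !ltnn !eqxx.
have h1' : nat_of_ord c != (i + m)%N.
  by apply/eqP => e; move/eqP: h1; apply; apply: ord_inj; rewrite inordK1 //; lia.
have h2' : nat_of_ord c != (i + m).+1.
  by apply/eqP => e; move/eqP: h2; apply; apply: ord_inj; rewrite inordK1 //; lia.
rewrite (negbTE h1') (negbTE h2').
case: (ltnP c i) => // hc.
case: (ltnP c (i + m)) => hc2.
  by have -> : (c < (i + m).+1)%N by lia.
by have -> : (c < (i + m).+1)%N = false by move: h1' => /eqP; lia.
Qed.

Lemma colf_iter (R : realType) d n (x : 'I_n.+1 -> 'cV[R]_d) (i m : nat) :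
  (i + m <= d)%N ->
  \det (mkM (colf x i (i + m))) = (-1) ^+ m * \det (mkM (gcol x)).
Proof.
elim: m => [|m IH] h.
  rewrite expr0 mul1r addn0; congr (\det _); apply/matrixP => r c; rewrite !mkM_E /colf.
  case: (ltnP c i) => // hc.
  by case: eqP => // ->.
rewrite addnS colf_step; last by lia.
by rewrite IH ?exprS ?mulN1r ?mulNr //; lia.
Qed.

Lemma F_self (R : realType) d n (x : 'I_n.+1 -> 'cV[R]_d) (i : nat) :
  (i <= d)%N -> F x i (gcol x i) = (-1) ^+ (d - i) * \det (mkM (gcol x)).
Proof.
move=> hi; rewrite -detB_F // -(@colf_iter _ _ _ x i (d - i)) ?subnKC //.
congr (\det _); apply/matrixP => r c; rewrite !mkM_E /colf /cB.
case: (ltnP c i) => // hc.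
have hcd := ltn_ord c.
case: (ltnP c d) => hcd2.
  by [].
by have -> : (nat_of_ord c == d) by lia.
Qed.

Lemma F_lin (R : realType) d n (x : 'I_n.+1 -> 'cV[R]_d) (i : nat) (I : finType)
  (a : I -> R) (v : I -> 'cV[R]_(1 + d)) :
  F x i (\sum_j a j *: v j) = \sum_j a j * F x i (v j).
Proof.
rewrite /F.
under eq_bigr do rewrite summxE mulr_suml.
rewrite exchange_big /=; apply: eq_bigr => j _.
rewrite mulr_sumr; apply: eq_bigr => r _.
by rewrite mxE mulrA.
Qed.

Lemma W0_V (R : realType) d n (x : 'I_n.+1 -> 'cV[R]_d) (w : 'I_n.+1 -> R) :
  W0 x w <-> \sum_j w j *: gcol x j = 0.
Proof.
have -> : \sum_j w j *: gcol x j = col_mx (\sum_j w j)%:M (\sum_j w j *: x j).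
  apply: (big_rec3 (fun V a b => V = col_mx a%:M b)).
    by rewrite raddf0 col_mx0.
  move=> j V a b _ ->.
  by rewrite /gcol inord_val /aug scale_col_mx add_col_mx scalemx1 raddfD.
split.
  by move=> [-> ->]; rewrite raddf0 col_mx0.
move/eqP; rewrite col_mx_eq0 => /andP[/eqP h1 /eqP h2]; split => //.
by move/matrixP: h1 => /(_ ord0 ord0); rewrite !mxE.
Qed.

Lemma FV_split (R : realType) d n (x : 'I_n.+1 -> 'cV[R]_d) (w : 'I_n.+1 -> R) (i : 'I_n.+1) :
  (i < d.+1)%N ->
  F x i (\sum_j w j *: gcol x j) =
  w i * (-1) ^+ (d - i) * \det (mkM (gcol x)) +
  \sum_(l < n.+1 | (d.+1 <= l)%N)
     w l * Delta x (i |: [set k : 'I_n.+1 | (d.+1 <= k)%N && (k != l)]).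
Proof.
move=> hi.
rewrite F_lin (bigID (fun j : 'I_n.+1 => (j < d.+1)%N)) /=.
congr (_ + _).
  rewrite (bigD1 i) //= big1 ?addr0.
    by rewrite F_self // mulrA.
  move=> j /andP[hj hji]; by rewrite F_other ?mulr0.
apply: eq_big => [j|j hj]; first by rewrite -leqNgt.
rewrite Delta_il //; last by rewrite ltnNge.
by rewrite detB_F.
Qed.

Lemma mainS (R : realType) (d n : nat) (x : 'I_n.+1 -> 'cV[R]_d) :
  Delta x [set k : 'I_n.+1 | (d.+1 <= k)%N] != 0 ->
  forall w : 'I_n.+1 -> R,
    W0 x w <->
    (forall i : 'I_n.+1, (i < d.+1)%N ->
       (-1) ^ ((i.+1)%:Z - d%:Z) * w i * Delta x [set k : 'I_n.+1 | (d.+1 <= k)%N]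
       = \sum_(l < n.+1 | (d.+1 <= l)%N)
           w l * Delta x (i |: [set k : 'I_n.+1 | (d.+1 <= k)%N && (k != l)])).
Proof.
move=> hD w.
have hn : (d.+1 <= n.+1)%N.
  rewrite leqNgt; apply/negP => hlt; move: hD; rewrite /Delta /ovol.
  have : (#|~: [set k : 'I_n.+1 | (d.+1 <= k)%N]| <= n.+1)%N.
    by rewrite -[X in (_ <= X)%N]card_ord max_card.
  move=> hc; have -> : (#|~: [set k : 'I_n.+1 | (d.+1 <= k)%N]| == (1 + d)%N) = false by lia.
  by rewrite eqxx.
rewrite Delta_0 // in hD *.
set D := \det (mkM (gcol x)).
set V := \sum_j w j *: gcol x j.
have key : forall i : 'I_n.+1, (i < d.+1)%N ->
   ((-1) ^ ((i.+1)%:Z - d%:Z) * w i * D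
       = \sum_(l < n.+1 | (d.+1 <= l)%N)
           w l * Delta x (i |: [set k : 'I_n.+1 | (d.+1 <= k)%N && (k != l)]))
   <-> F x i V = 0.
  move=> i hi; rewrite /V FV_split // sign_lem; last by lia.
  rewrite -/D; split => h.
    by rewrite -h; ring.
  by move/eqP: h; rewrite addrC addr_eq0 => /eqP ->; ring.
rewrite W0_V; split.
  move=> hV i hi; apply/key => //; rewrite /V hV.
  by rewrite /F big1 // => r _; rewrite mxE mul0r.
move=> H.
have hF : forall k : 'I_(1 + d), F x k V = 0.
  move=> k.
  have hk : (k < n.+1)%N by have := ltn_ord k; lia.
  have hk' : ((inord k : 'I_n.+1) < d.+1)%N by rewrite inordK.
  by have := proj1 (key _ hk') (H _ hk'); rewrite inordK.
have hA : mkM (gcol x) \in unitmx by rewrite unitmxE unitfE.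
set c := invmx (mkM (gcol x)) *m V.
have hVc : V = \sum_k c k ord0 *: gcol x k.
  rewrite -{1}(mulKVmx hA V) -/c; apply/matrixP => r s; rewrite [s]ord1.
  rewrite !mxE summxE; apply: eq_bigr => k _; rewrite mkM_E [RHS]mxE mulrC.
  by [].
have hc : c = 0.
  apply/matrixP => k s; rewrite [s]ord1 [RHS]mxE.
  have := hF k; rewrite hVc F_lin (bigD1 k) //= big1 ?addr0.
    rewrite F_self; last by have := ltn_ord k; lia.
    move/eqP; rewrite !mulf_eq0 signr_eq0 (negbTE hD) orbF /=.
    by rewrite orbF => /eqP.
  move=> j hj; rewrite F_other ?mulr0 //; try (by have := ltn_ord j; lia);
    try (by have := ltn_ord k; lia).
by rewrite -/V -(mulKVmx hA V) -/c hc mulmx0.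
Qed.

Theorem theorem4p7 (R : realType) (d n : nat) (x : 'I_n -> 'cV[R]_d) :
  full_dim x ->
  Delta x [set k : 'I_n | (d.+1 <= k)%N] != 0 ->
  forall w : 'I_n -> R,
    W0 x w <->
    (forall i : 'I_n, (i < d.+1)%N ->
       (-1) ^ ((i.+1)%:Z - d%:Z) * w i * Delta x [set k : 'I_n | (d.+1 <= k)%N]
       = \sum_(l < n | (d.+1 <= l)%N)
           w l * Delta x (i |: [set k : 'I_n | (d.+1 <= k)%N && (k != l)])).
Proof.
case: n x => [|n] x _ hD; last exact: mainS.
exfalso; move: hD; rewrite /Delta /ovol.
have : (#|~: [set k : 'I_0 | (d.+1 <= k)%N]| <= 0)%N.
  by rewrite -[X in (_ <= X)%N](card_ord 0) max_card.
move=> hc; have -> : (#|~: [set k : 'I_0 | (d.+1 <= k)%N]| == (1 + d)%N) = false by lia.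
by rewrite eqxx.
Qed.
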